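(* Let $X$ and $Y$ be random variables with values in $\mathbb{N}=\{0,1,2,\dots\}$ such that $P\{X=0\}\neq 1$, $P\{Y=0\}\neq1$, and let $\hat p_X(z)=\mathbb{E}[z^X]$, $\hat p_Y(z)=\mathbb{E}[z^Y]$ for $z\in[0,1]$. Let $f_0$ be a probability density on $\mathbb{N}$ with probability generating function $\hat f_0(z)=\sum_{v\ge0}z^vf_0(v)$. Then the initial value problem $$\frac{\partial}{\partial t}\hat f_t(z)=\hat f_t(\hat p_X(z))\,\hat f_t(\hat p_Y(z))-\hat f_t(z),\qquad z\in[0,1],\ t>0,$$ with initial datum $\hat f_0$, has a unique global solution. For any $t>0$ this solution can be written as $$\hat f_t(z)=e^{-t}\sum_{n\ge0}(1-e^{-t})^n\,\hat q_n(z),$$ where $\hat q_0=\hat f_0$ and, for $n\ge1$, $$\hat q_n(z)=\frac1n\sum_{j=0}^{n-1}\hat q_j(\hat p_X(z))\,\hat q_{n-1-j}(\hat p_Y(z)).$$ Moreover, $\hat f_t$ is the probability generating function of a probability density on $\mathbb{N}$ for every $t>0$.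
   Context: This equation is the probability-generating-function form of the Boltzmann-type equation $\partial_t f_t(v)=Q^+(f_t,f_t)(v)-f_t(v)$, $v\in\mathbb{N}$, where for probability densities $f,g$ on $\mathbb{N}$, $Q^+(f,g)(v)=P\{\sum_{i=1}^{V_1}Y_i+\sum_{i=1}^{V_2}X_i=v\}$ with $V_1\sim f$, $V_2\sim g$, $X_i$ i.i.d. with the law of $X$, $Y_i$ i.i.d. with the law of $Y$, all independent. *)

(* Defs.v *)
From Stdlib Require Import Reals List.
From Coquelicot Require Import Coquelicot.
Open Scope R_scope.

Definition is_density (f : nat -> R) : Prop :=
  (forall v, 0 <= f v) /\ is_series f 1.

Definition pgf (f : nat -> R) (z : R) : R := Series (fun v => f v * z ^ v).

Fixpoint qlist (pXh pYh f0h : R -> R) (n : nat) : list (R -> R) :=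
  match n with
  | O => f0h :: nil
  | S m =>
      let L := qlist pXh pYh f0h m in
      L ++ ((fun z => / INR (S m) *
               sum_f_R0 (fun j => nth j L (fun _ => 0) (pXh z) *
                                  nth (m - j) L (fun _ => 0) (pYh z)) m) :: nil)
  end.

Definition qhat (pXh pYh f0h : R -> R) (n : nat) : R -> R :=
  nth n (qlist pXh pYh f0h n) (fun _ => 0).

Definition is_solution (pXh pYh f0h : R -> R) (F : R -> R -> R) : Prop :=
  (forall z, 0 <= z <= 1 -> F 0 z = f0h z) /\
  (forall z, 0 <= z <= 1 -> filterlim (fun t => F t z) (at_right 0) (locally (F 0 z))) /\
  (forall t z, 0 < t -> 0 <= z <= 1 ->
     is_derive (fun s => F s z) t (F t (pXh z) * F t (pYh z) - F t z)) /\
  (forall T, 0 < T -> exists M, forall t z, 0 <= t <= T -> 0 <= z <= 1 -> Rabs (F t z) <= M).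

(* Main.v *)
Require Import Defs.
From Stdlib Require Import Reals Lra Lia List.
From Coquelicot Require Import Coquelicot.
Open Scope R_scope.

Lemma normR (x : R) : norm x = Rabs x.
Proof. reflexivity. Qed.

Lemma is_series_lim (a : nat -> R) l : is_series a l -> is_lim_seq (sum_n a) l.
Proof. intro H; exact H. Qed.

Lemma lim_is_series (a : nat -> R) (l : R) : is_lim_seq (sum_n a) l -> is_series a l.
Proof. intro H; exact H. Qed.

Lemma sum_n_incr (a : nat -> R) : (forall n, 0 <= a n) ->
  forall n, sum_n a n <= sum_n a (S n).
Proof. intros H n. rewrite sum_Sn. change (plus (sum_n a n) (a (S n))) with (sum_n a n + a (S n)). specialize (H (S n)). lra. Qed.

Lemma sum_n_mono (a : nat -> R) : (forall n, 0 <= a n) ->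
  forall n m, (n <= m)%nat -> sum_n a n <= sum_n a m.
Proof. intros H n m Hnm. induction Hnm. lra. eapply Rle_trans. apply IHHnm. apply sum_n_incr; auto. Qed.

Lemma psum_le (a : nat -> R) l : (forall n, 0 <= a n) -> is_series a l ->
  forall N, sum_n a N <= l.
Proof.
  intros H Hs N.
  assert (Hl := is_series_lim _ _ Hs).
  apply is_lim_seq_incr_n with (N := N) in Hl.
  assert (Rbar_le (sum_n a N) l).
  { eapply is_lim_seq_le with (u := fun _ => sum_n a N). 2: apply is_lim_seq_const. 2: exact Hl.
    intro n. apply sum_n_mono; auto. lia. }
  exact H0.
Qed.

Lemma term_le (a : nat -> R) l : (forall n, 0 <= a n) -> is_series a l ->
  forall N, a N <= l.
Proof.
  intros H Hs N. eapply Rle_trans. 2: apply (psum_le a l H Hs N).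
  destruct N. rewrite sum_O; lra. rewrite sum_Sn.
  change (plus (sum_n a N) (a (S N))) with (sum_n a N + a (S N)).
  assert (0 <= sum_n a N). { eapply Rle_trans. 2: apply (sum_n_mono a H 0 N); lia. rewrite sum_O; auto. }
  lra.
Qed.

Lemma lim_le_bound (a : nat -> R) l c : is_series a l -> (forall N, sum_n a N <= c) -> l <= c.
Proof.
  intros Hs H. assert (Rbar_le l c).
  { eapply is_lim_seq_le with (v := fun _ => c). exact H. exact Hs. apply is_lim_seq_const. }
  exact H0.
Qed.

Lemma series_nonneg (a : nat -> R) l : (forall n, 0 <= a n) -> is_series a l -> 0 <= l.
Proof. intros H Hs. eapply Rle_trans. apply (H 0%nat). apply (term_le a l H Hs). Qed.

Lemma ex_series_bounded (a : nat -> R) c : (forall n, 0 <= a n) -> (forall N, sum_n a N <= c) -> ex_series a.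
Proof.
  intros H Hb. destruct (ex_finite_lim_seq_incr (sum_n a) c (sum_n_incr a H) Hb) as [l Hl].
  exists l. exact Hl.
Qed.

Lemma ex_series_cmp (a b : nat -> R) : (forall n, Rabs (a n) <= b n) -> ex_series b -> ex_series a.
Proof. intros H Hb. apply (ex_series_le a b); auto. Qed.

Lemma Series_fin_swap (a : nat -> nat -> R) V : (forall v, ex_series (fun n => a n v)) ->
  ex_series (fun n => sum_n (a n) V) /\
  Series (fun n => sum_n (a n) V) = sum_n (fun v => Series (fun n => a n v)) V.
Proof.
  intro He. induction V.
  - split. eapply ex_series_ext. 2: apply (He 0%nat). intro n; rewrite sum_O; auto.
    rewrite sum_O. apply Series_ext. intro n; rewrite sum_O; auto.
  - destruct IHV as [IH1 IH2]. split.
    + eapply ex_series_ext. 2: apply (ex_series_plus _ _ IH1 (He (S V))).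
      intro n; rewrite sum_Sn; reflexivity.
    + rewrite sum_Sn. rewrite <- IH2.
      rewrite <- Series_plus; auto. apply Series_ext. intro n; rewrite sum_Sn; reflexivity.
Qed.

Lemma tonelli (a : nat -> nat -> R) (b : nat -> R) :
  (forall n v, 0 <= a n v) -> (forall n, is_series (a n) (b n)) -> ex_series b ->
  (forall v, ex_series (fun n => a n v)) /\ is_series (fun v => Series (fun n => a n v)) (Series b).
Proof.
  intros Ha Hs Hb.
  assert (Hbpos : forall n, 0 <= b n) by (intro n; exact (series_nonneg _ _ (Ha n) (Hs n))).
  assert (He : forall v, ex_series (fun n => a n v)).
  { intro v. apply (ex_series_cmp _ b); auto. intro n. rewrite Rabs_pos_eq by auto.
    apply (term_le (a n) (b n) (Ha n) (Hs n)). }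
  split; auto.
  set (T := fun v => Series (fun n => a n v)).
  assert (HT : forall v, 0 <= T v).
  { intro v. apply (series_nonneg (fun n => a n v)); auto. apply Series_correct; auto. }
  assert (HbS := Series_correct _ Hb).
  assert (Hbound : forall N, sum_n T N <= Series b).
  { intro N. destruct (Series_fin_swap a N He) as [E1 E2]. unfold T. rewrite <- E2.
    apply Series_le; auto. intro n. split.
    - apply (Rle_trans _ (a n 0%nat)). auto. rewrite <- sum_O.
      apply sum_n_mono; auto; lia.
    - apply psum_le; auto. }
  assert (HTe : ex_series T) by (apply (ex_series_bounded T (Series b)); auto).
  assert (HTS := Series_correct _ HTe).
  assert (Series T <= Series b) by (apply (lim_le_bound T _ _ HTS Hbound)).
  assert (Series b <= Series T).
  { apply (lim_le_bound b _ _ HbS). intro N.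
    assert (E : sum_n b N = Series (fun v => sum_n (fun n => a n v) N)).
    { assert (Hs' : forall n, ex_series (fun v => a n v)) by (intro n; exists (b n); apply Hs).
      destruct (Series_fin_swap (fun v n => a n v) N Hs') as [_ E2]. rewrite E2.
      clear -Hs. induction N. rewrite !sum_O. symmetry; apply is_series_unique; auto.
      rewrite !sum_Sn, IHN. f_equal. symmetry; apply is_series_unique; auto. }
    rewrite E. apply Series_le; auto. intro v. split.
    - apply (Rle_trans _ (a 0%nat v)). auto. rewrite <- (sum_O (fun n => a n v)).
      apply sum_n_mono; auto; lia.
    - unfold T. apply psum_le; auto. apply Series_correct; auto. }
  replace (Series b) with (Series T) by lra. exact HTS.
Qed.
From Stdlib Require Import IndefiniteDescription.

Lemma pow01 z n : 0 <= z <= 1 -> 0 <= z ^ n <= 1.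
Proof. intro Hz. induction n; simpl. lra. split. apply Rmult_le_pos; lra.
  apply (Rle_trans _ (1 * 1)). apply Rmult_le_compat; lra. lra. Qed.


Lemma pgf_terms_ex g s z : (forall v, 0 <= g v) -> is_series g s -> 0 <= z <= 1 ->
  ex_series (fun v => g v * z ^ v).
Proof.
  intros Hg Hs Hz. apply (ex_series_cmp _ g). 2: exists s; auto.
  intro v. destruct (pow01 z v Hz). rewrite Rabs_pos_eq. 2: apply Rmult_le_pos; auto.
  rewrite <- (Rmult_1_r (g v)) at 2. apply Rmult_le_compat_l; auto.
Qed.

Lemma pgf_is g s z : (forall v, 0 <= g v) -> is_series g s -> 0 <= z <= 1 ->
  is_series (fun v => g v * z ^ v) (pgf g z).
Proof. intros. apply Series_correct. eapply pgf_terms_ex; eauto. Qed.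

Lemma pgf_range g s z : (forall v, 0 <= g v) -> is_series g s -> 0 <= z <= 1 ->
  0 <= pgf g z <= s.
Proof.
  intros Hg Hs Hz. assert (Ht : forall v, 0 <= g v * z ^ v <= g v).
  { intro v. destruct (pow01 z v Hz). split. apply Rmult_le_pos; auto.
    rewrite <- (Rmult_1_r (g v)) at 2. apply Rmult_le_compat_l; auto. }
  split. apply (series_nonneg (fun v => g v * z ^ v)). intro v; apply Ht. eapply pgf_is; eauto.
  rewrite <- (is_series_unique _ _ Hs). apply Series_le; auto. exists s; auto.
Qed.

Definition Pm (s : R) (h : R -> R) : Prop := exists g, (forall v, 0 <= g v) /\ is_series g s /\
  forall z, 0 <= z <= 1 -> h z = pgf g z.

Lemma Pm_ext s h h' : (forall z, 0 <= z <= 1 -> h z = h' z) -> Pm s h -> Pm s h'.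
Proof. intros E [g [H1 [H2 H3]]]. exists g; repeat split; auto. intros z Hz. rewrite <- E; auto. Qed.

Lemma Pm_range s h z : Pm s h -> 0 <= z <= 1 -> 0 <= h z <= s.
Proof. intros [g [H1 [H2 H3]]] Hz. rewrite H3; auto. eapply pgf_range; eauto. Qed.

Lemma Pm_scal c s h : 0 <= c -> Pm s h -> Pm (c * s) (fun z => c * h z).
Proof.
  intros Hc [g [H1 [H2 H3]]]. exists (fun v => c * g v). repeat split.
  intro v; apply Rmult_le_pos; auto.
  apply (is_series_scal_l c g s H2).
  intros z Hz. rewrite H3; auto. unfold pgf. rewrite <- Series_scal_l. apply Series_ext; intro; ring.
Qed.

Lemma Pm_plus s1 s2 h1 h2 : Pm s1 h1 -> Pm s2 h2 -> Pm (s1 + s2) (fun z => h1 z + h2 z).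
Proof.
  intros [g1 [H1 [H2 H3]]] [g2 [K1 [K2 K3]]]. exists (fun v => g1 v + g2 v). repeat split.
  intro v; specialize (H1 v); specialize (K1 v); lra.
  apply (is_series_plus g1 g2 s1 s2 H2 K2).
  intros z Hz. rewrite H3, K3; auto. unfold pgf. rewrite <- Series_plus.
  apply Series_ext; intro; ring. eapply pgf_terms_ex; eauto. eapply pgf_terms_ex; eauto.
Qed.

Lemma Pm_sum m (s : nat -> R) (h : nat -> R -> R) : (forall j, (j <= m)%nat -> Pm (s j) (h j)) ->
  Pm (sum_f_R0 s m) (fun z => sum_f_R0 (fun j => h j z) m).
Proof.
  induction m; intro H. simpl. apply H; lia.
  simpl. apply Pm_plus. apply IHm. intros; apply H; lia. apply H; lia.
Qed.

Lemma eventually0_series (a : nat -> R) : (forall n, (1 <= n)%nat -> a n = 0) -> is_series a (a 0%nat).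
Proof.
  intro H. apply lim_is_series. apply (is_lim_seq_ext (fun _ => a 0%nat)). 2: apply is_lim_seq_const.
  intro n. induction n. rewrite sum_O; auto. rewrite sum_Sn, <- IHn. rewrite (H (S n)) by lia.
  change (a 0%nat = a 0%nat + 0). ring.
Qed.

Lemma Pm_one : Pm 1 (fun _ => 1).
Proof.
  exists (fun n => match n with O => 1 | _ => 0 end). repeat split.
  intro v; destruct v; lra.
  apply (eventually0_series (fun n => match n with O => 1 | _ => 0 end)). intros [|n] Hn. lia. auto.
  intros z Hz. unfold pgf. symmetry. apply is_series_unique.
  pose proof (eventually0_series (fun n : nat => (match n with O => 1 | _ => 0 end) * z ^ n)) as E.
  cbv beta iota in E. replace (1 * z ^ 0) with 1 in E by (simpl; ring).
  apply E. intros [|n] Hn. lia. ring.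
Qed.

Lemma Pm_mult s1 s2 h1 h2 : Pm s1 h1 -> Pm s2 h2 -> Pm (s1 * s2) (fun z => h1 z * h2 z).
Proof.
  intros [g1 [H1 [H2 H3]]] [g2 [K1 [K2 K3]]].
  exists (fun n => sum_f_R0 (fun k => g1 k * g2 (n - k)%nat) n). repeat split.
  intro v; apply cond_pos_sum; intro k; apply Rmult_le_pos; auto.
  apply is_series_mult; auto.
  eapply ex_series_ext. 2: exists s1; exact H2. intro n; rewrite Rabs_pos_eq; auto.
  eapply ex_series_ext. 2: exists s2; exact K2. intro n; rewrite Rabs_pos_eq; auto.
  intros z Hz. rewrite H3, K3 by auto. symmetry. apply is_series_unique.
  eapply is_series_ext. 2: apply (is_series_mult (fun k => g1 k * z ^ k) (fun k => g2 k * z ^ k)).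
  - intro n. simpl. rewrite Rmult_comm, scal_sum. apply sum_eq. intros k Hk.
    assert (E : z ^ n = z ^ k * z ^ (n - k)) by (rewrite <- pow_add; f_equal; lia).
    rewrite E. ring.
  - eapply pgf_is; eauto.
  - eapply pgf_is; eauto.
  - apply (ex_series_cmp _ g1). 2: exists s1; auto. intro n. destruct (pow01 z n Hz).
    rewrite Rabs_Rabsolu, Rabs_pos_eq by (apply Rmult_le_pos; auto).
    rewrite <- (Rmult_1_r (g1 n)) at 2. apply Rmult_le_compat_l; auto.
  - apply (ex_series_cmp _ g2). 2: exists s2; auto. intro n. destruct (pow01 z n Hz).
    rewrite Rabs_Rabsolu, Rabs_pos_eq by (apply Rmult_le_pos; auto).
    rewrite <- (Rmult_1_r (g2 n)) at 2. apply Rmult_le_compat_l; auto.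
Qed.

Lemma Pm_pow h : Pm 1 h -> forall v, Pm 1 (fun z => h z ^ v).
Proof.
  intros H v. induction v. apply Pm_one.
  replace 1 with (1 * 1) by ring. apply (Pm_mult 1 1 h (fun z => h z ^ v)); auto.
Qed.

Lemma Pm_mix (c : nat -> R) (s : R) (h : nat -> R -> R) : (forall n, 0 <= c n) -> is_series c s ->
  (forall n, Pm 1 (h n)) -> Pm s (fun z => Series (fun n => c n * h n z)).
Proof.
  intros Hc Hcs Hh.
  set (g := fun n => proj1_sig (constructive_indefinite_description _ (Hh n))).
  assert (Hg : forall n, (forall v, 0 <= g n v) /\ is_series (g n) 1 /\
     forall z, 0 <= z <= 1 -> h n z = pgf (g n) z).
  { intro n. unfold g. destruct (constructive_indefinite_description _ (Hh n)) as [gg Hgg]. exact Hgg. }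
  exists (fun v => Series (fun n => c n * g n v)).
  assert (T1 := tonelli (fun n v => c n * g n v) (fun n => c n * 1)).
  destruct T1 as [_ T1].
  - intros n v. apply Rmult_le_pos; auto. apply Hg.
  - intro n. apply (is_series_scal_l (c n) (g n) 1). apply Hg.
  - apply (ex_series_ext c). intro n. symmetry; apply Rmult_1_r. exists s; exact Hcs.
  - repeat split.
    + intro v. apply (series_nonneg (fun n => c n * g n v)).
      intro n; apply Rmult_le_pos; auto; apply Hg.
      apply Series_correct. apply (ex_series_cmp _ c). 2: exists s; auto.
      intro n. destruct (Hg n) as [G1 [G2 _]]. rewrite Rabs_pos_eq by (apply Rmult_le_pos; auto).
      rewrite <- (Rmult_1_r (c n)) at 2. apply Rmult_le_compat_l; auto. apply (term_le _ _ G1 G2).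
    + replace s with (Series (fun n => c n * 1)). exact T1.
      rewrite <- (is_series_unique _ _ Hcs). apply Series_ext; intro; ring.
    + intros z Hz.
      assert (T2 := tonelli (fun n v => c n * g n v * z ^ v) (fun n => c n * pgf (g n) z)).
      destruct T2 as [_ T2].
      * intros n v. destruct (pow01 z v Hz). apply Rmult_le_pos; auto. apply Rmult_le_pos; auto. apply Hg.
      * intro n. destruct (Hg n) as [G1 [G2 _]].
        assert (Hi := is_series_scal_l (c n) _ _ (pgf_is (g n) 1 z G1 G2 Hz)).
        eapply is_series_ext. 2: exact Hi. intro v. unfold scal; simpl; unfold mult; simpl. ring.
      * apply (ex_series_cmp _ c). 2: exists s; auto. intro n.
        destruct (Hg n) as [G1 [G2 _]]. destruct (pgf_range _ _ z G1 G2 Hz).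
        rewrite Rabs_pos_eq by (apply Rmult_le_pos; auto).
        rewrite <- (Rmult_1_r (c n)) at 2. apply Rmult_le_compat_l; auto.
      * unfold pgf at 1. rewrite (Series_ext _ (fun n => c n * pgf (g n) z)).
        2: intro n; destruct (Hg n) as [_ [_ G3]]; rewrite G3; auto.
        symmetry. apply is_series_unique. eapply is_series_ext. 2: exact T2.
        intro v. simpl. rewrite <- Series_scal_r. reflexivity.
Qed.

Lemma Pm_comp h p : Pm 1 h -> (forall v, 0 <= p v) -> is_series p 1 ->
  Pm 1 (fun z => h (pgf p z)).
Proof.
  intros [g [H1 [H2 H3]]] Hp Hps.
  assert (Hpp : Pm 1 (pgf p)) by (exists p; repeat split; auto).
  apply (Pm_ext 1 (fun z => Series (fun v => g v * pgf p z ^ v))).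
  - intros z Hz. rewrite H3. reflexivity. eapply pgf_range; eauto.
  - apply (Pm_mix g 1 (fun v z => pgf p z ^ v)); auto. intro n. apply Pm_pow; auto.
Qed.
Lemma qlist_len (pXh pYh f0h : R -> R) n : length (qlist pXh pYh f0h n) = S n.
Proof. induction n; simpl; auto. rewrite length_app, IHn. simpl. lia. Qed.

Lemma qlist_nth (pXh pYh f0h : R -> R) n j : (j <= n)%nat -> nth j (qlist pXh pYh f0h n) (fun _ => 0) = qhat pXh pYh f0h j.
Proof.
  unfold qhat. induction n; intro H.
  - assert (j = 0%nat) by lia. subst; auto.
  - destruct (Nat.eq_dec j (S n)). subst; auto.
    simpl qlist. rewrite app_nth1. apply IHn; lia. rewrite qlist_len. lia.
Qed.

Lemma qhat_S (pXh pYh f0h : R -> R) m z : qhat pXh pYh f0h (S m) z = / INR (S m) *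
  sum_f_R0 (fun j => qhat pXh pYh f0h j (pXh z) * qhat pXh pYh f0h (m - j) (pYh z)) m.
Proof.
  unfold qhat at 1. simpl qlist. rewrite app_nth2. rewrite qlist_len. rewrite Nat.sub_diag. simpl.
  f_equal. apply sum_eq. intros j Hj. rewrite !qlist_nth by lia. reflexivity.
  rewrite qlist_len. lia.
Qed.

Lemma qhat_0 (pXh pYh f0h : R -> R) : qhat pXh pYh f0h 0 = f0h.
Proof. reflexivity. Qed.

Lemma qhat_Pm pX pY f0 : (forall v, 0 <= pX v) -> is_series pX 1 ->
  (forall v, 0 <= pY v) -> is_series pY 1 -> (forall v, 0 <= f0 v) -> is_series f0 1 ->
  forall n, Pm 1 (qhat (pgf pX) (pgf pY) (pgf f0) n).
Proof.
  intros HX1 HX2 HY1 HY2 Hf1 Hf2.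
  assert (forall n k, (k <= n)%nat -> Pm 1 (qhat (pgf pX) (pgf pY) (pgf f0) k)).
  { induction n; intros k Hk.
    - assert (k = 0%nat) by lia. subst. rewrite qhat_0. exists f0; repeat split; auto.
    - destruct (Nat.eq_dec k (S n)). 2: apply IHn; lia. subst.
      apply (Pm_ext 1 (fun z => / INR (S n) * sum_f_R0 (fun j => qhat (pgf pX) (pgf pY) (pgf f0) j (pgf pX z) *
          qhat (pgf pX) (pgf pY) (pgf f0) (n - j) (pgf pY z)) n)).
      intros; rewrite qhat_S; auto.
      replace 1 with (/ INR (S n) * sum_f_R0 (fun _ => 1 * 1) n) at 1.
      apply Pm_scal. left; apply Rinv_0_lt_compat; apply lt_0_INR; lia.
      apply (Pm_sum n (fun _ => 1 * 1) (fun j z => qhat (pgf pX) (pgf pY) (pgf f0) j (pgf pX z) *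
          qhat (pgf pX) (pgf pY) (pgf f0) (n - j) (pgf pY z))).
      intros j Hj. apply (Pm_mult 1 1 (fun z => qhat (pgf pX) (pgf pY) (pgf f0) j (pgf pX z))
         (fun z => qhat (pgf pX) (pgf pY) (pgf f0) (n - j) (pgf pY z))).
      apply (Pm_comp (qhat (pgf pX) (pgf pY) (pgf f0) j) pX); [apply IHn; lia | auto | auto].
      apply (Pm_comp (qhat (pgf pX) (pgf pY) (pgf f0) (n - j)) pY); [apply IHn; lia | auto | auto].
      rewrite sum_cte. field. apply not_0_INR; lia. }
  intro n; apply (H n n); lia.
Qed.


Definition Q pX pY f0 := qhat (pgf pX) (pgf pY) (pgf f0).
Definition FF pX pY f0 (t z : R) := exp (- t) * PSeries (fun n => Q pX pY f0 n z) (1 - exp (- t)).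

Lemma pgf01 p z : is_density p -> 0 <= z <= 1 -> 0 <= pgf p z <= 1.
Proof. intros [H1 H2] Hz. eapply pgf_range; eauto. Qed.

Lemma Q_range pX pY f0 n z : is_density pX -> is_density pY -> is_density f0 -> 0 <= z <= 1 ->
  0 <= Q pX pY f0 n z <= 1.
Proof. intros [A1 A2] [B1 B2] [C1 C2] Hz. apply Pm_range; auto. apply qhat_Pm; auto. Qed.

Lemma u_range t : 0 <= t -> 0 < exp (- t) <= 1 /\ 0 <= 1 - exp (- t) < 1.
Proof.
  intro Ht. assert (0 < exp (- t)) by apply exp_pos.
  assert (exp (- t) <= 1). { rewrite <- exp_0. destruct (Req_dec t 0). subst. rewrite Ropp_0; lra.
    left. apply exp_increasing. lra. }
  lra.
Qed.

Lemma radius_ge1 a : (forall n, Rabs (a n) <= 1) -> forall x, Rabs x < 1 -> Rbar_lt (Rabs x) (CV_radius a).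
Proof.
  intros Ha x Hx. destruct (CV_radius_bounded a) as [Hub _].
  assert (Rbar_le 1 (CV_radius a)).
  { apply Hub. exists 1. intro n. rewrite pow1, Rmult_1_r. auto. }
  eapply Rbar_lt_le_trans. 2: exact H. exact Hx.
Qed.

Lemma Q_abs pX pY f0 n z : is_density pX -> is_density pY -> is_density f0 -> 0 <= z <= 1 ->
  Rabs (Q pX pY f0 n z) <= 1.
Proof. intros. destruct (Q_range pX pY f0 n z); auto. rewrite Rabs_pos_eq; auto. Qed.

Lemma F_deriv pX pY f0 t z : is_density pX -> is_density pY -> is_density f0 -> 0 <= t -> 0 <= z <= 1 ->
  is_derive (fun s => FF pX pY f0 s z) t
    (FF pX pY f0 t (pgf pX z) * FF pX pY f0 t (pgf pY z) - FF pX pY f0 t z).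
Proof.
  intros HX HY Hf Ht Hz.
  destruct (u_range t Ht) as [He Hu].
  set (u := 1 - exp (- t)).
  assert (Hu' : Rabs u < 1) by (unfold u; rewrite Rabs_pos_eq; lra).
  set (a := fun n => Q pX pY f0 n z).
  set (aX := fun n => Q pX pY f0 n (pgf pX z)).
  set (aY := fun n => Q pX pY f0 n (pgf pY z)).
  assert (Ra : Rbar_lt (Rabs u) (CV_radius a)).
  { apply radius_ge1; auto. intro n; apply Q_abs; auto. }
  assert (RX : Rbar_lt (Rabs u) (CV_radius aX)).
  { apply radius_ge1; auto. intro n; apply Q_abs; auto. apply pgf01; auto. }
  assert (RY : Rbar_lt (Rabs u) (CV_radius aY)).
  { apply radius_ge1; auto. intro n; apply Q_abs; auto. apply pgf01; auto. }
  assert (H1 : is_derive (PSeries a) u (PSeries aX u * PSeries aY u)).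
  { rewrite <- PSeries_mult by auto. rewrite <- (PSeries_ext (PS_derive a)).
    apply is_derive_PSeries; auto.
    intro n. unfold PS_derive, a, PS_mult, aX, aY, Q. rewrite qhat_S. field. apply not_0_INR; lia. }
  assert (H2 : is_derive (fun s => 1 - exp (-s)) t (exp (-t))) by (auto_derive; auto; ring).
  assert (H3 : is_derive (fun s => exp (-s)) t (- exp (-t))) by (auto_derive; auto; ring).
  pose proof (is_derive_comp (PSeries a) (fun s => 1 - exp (-s)) t _ _ H1 H2) as H4.
  pose proof (is_derive_mult _ _ t _ _ H3 H4 Rmult_comm) as H5.
  unfold FF. fold u. fold a.
  replace (exp (- t) * PSeries (fun n : nat => Q pX pY f0 n (pgf pX z)) u *
    (exp (- t) * PSeries (fun n : nat => Q pX pY f0 n (pgf pY z)) u) - exp (- t) * PSeries a u)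
    with (plus (mult (- exp (- t)) (PSeries a (1 - exp (- t))))
       (mult (exp (- t)) (scal (exp (- t)) (PSeries aX u * PSeries aY u)))).
  exact H5.
  unfold plus, mult, scal; simpl. unfold mult; simpl. fold u. unfold aX, aY. ring.
Qed.

Lemma F_series pX pY f0 t z : is_density pX -> is_density pY -> is_density f0 -> 0 <= t -> 0 <= z <= 1 ->
  is_series (fun n => exp (- t) * (1 - exp (- t)) ^ n * Q pX pY f0 n z) (FF pX pY f0 t z).
Proof.
  intros HX HY Hf Ht Hz.
  destruct (u_range t Ht) as [He Hu].
  assert (Hu' : Rabs (1 - exp (- t)) < 1) by (rewrite Rabs_pos_eq; lra).
  assert (Ra : Rbar_lt (Rabs (1 - exp (- t))) (CV_radius (fun n => Q pX pY f0 n z))).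
  { apply radius_ge1; auto. intro n; apply Q_abs; auto. }
  assert (Hex := ex_series_Rabs _ (CV_disk_inside _ _ Ra)).
  assert (Hs := Series_correct _ Hex).
  assert (Hs2 := is_series_scal_l (exp (- t)) _ _ Hs).
  unfold FF, PSeries. eapply is_series_ext. 2: exact Hs2.
  intro n. unfold scal; simpl; unfold mult; simpl. ring.
Qed.

Lemma F_range pX pY f0 t z : is_density pX -> is_density pY -> is_density f0 -> 0 <= t -> 0 <= z <= 1 ->
  0 <= FF pX pY f0 t z <= 1.
Proof.
  intros HX HY Hf Ht Hz.
  destruct (u_range t Ht) as [He Hu].
  assert (Hu' : Rabs (1 - exp (- t)) < 1) by (rewrite Rabs_pos_eq; lra).
  assert (Hs := F_series pX pY f0 t z HX HY Hf Ht Hz).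
  assert (Hterm : forall n, 0 <= exp (- t) * (1 - exp (- t)) ^ n * Q pX pY f0 n z <= exp (- t) * (1 - exp (- t)) ^ n).
  { intro n. destruct (Q_range pX pY f0 n z HX HY Hf Hz). assert (0 <= (1 - exp (-t)) ^ n) by (apply pow_le; lra).
    split. apply Rmult_le_pos; auto. apply Rmult_le_pos; lra.
    rewrite <- (Rmult_1_r (exp (- t) * (1 - exp (- t)) ^ n)) at 2. apply Rmult_le_compat_l; auto.
    apply Rmult_le_pos; lra. }
  assert (Hg := is_series_scal_l (exp (- t)) _ _ (is_series_geom _ Hu')).
  split. apply (series_nonneg _ _ (fun n => proj1 (Hterm n)) Hs).
  rewrite <- (is_series_unique _ _ Hs).
  apply (Rle_trans _ (Series (fun n => exp (- t) * (1 - exp (- t)) ^ n))).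
  apply Series_le. auto. exists (scal (exp (- t)) (/ (1 - (1 - exp (- t))))). exact Hg.
  rewrite Series_scal_l, Series_geom by auto.
  replace (1 - (1 - exp (- t))) with (exp (- t)) by ring. rewrite Rinv_r; lra.
Qed.

Lemma F_density pX pY f0 t : is_density pX -> is_density pY -> is_density f0 -> 0 <= t ->
  exists g, is_density g /\ forall z, 0 <= z <= 1 -> FF pX pY f0 t z = pgf g z.
Proof.
  intros HX HY Hf Ht.
  destruct (u_range t Ht) as [He Hu].
  assert (Hu' : Rabs (1 - exp (- t)) < 1) by (rewrite Rabs_pos_eq; lra).
  assert (Hg := is_series_scal_l (exp (- t)) _ _ (is_series_geom _ Hu')).
  assert (Hc : is_series (fun n => exp (- t) * (1 - exp (- t)) ^ n) 1).
  { eapply is_series_ext. 2: replace 1 with (scal (exp (- t)) (/ (1 - (1 - exp (- t))))). 2: exact Hg.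
    intro n; reflexivity. unfold scal; simpl; unfold mult; simpl.
    replace (1 - (1 - exp (- t))) with (exp (- t)) by ring. rewrite Rinv_r; lra. }
  destruct HX as [X1 X2], HY as [Y1 Y2], Hf as [F1 F2].
  assert (HP := Pm_mix (fun n => exp (- t) * (1 - exp (- t)) ^ n) 1 (fun n => Q pX pY f0 n)).
  destruct HP as [g [G1 [G2 G3]]].
  - intro n. apply Rmult_le_pos. lra. apply pow_le; lra.
  - exact Hc.
  - intro n. apply qhat_Pm; auto.
  - exists g. split. split; auto. intros z Hz. rewrite <- G3 by auto.
    symmetry. apply is_series_unique. apply F_series; auto; split; auto.
Qed.

Lemma F_0 pX pY f0 z : FF pX pY f0 0 z = pgf f0 z.
Proof. unfold FF. rewrite Ropp_0, exp_0. replace (1 - 1) with 0 by ring. rewrite PSeries_0. unfold Q. rewrite qhat_0. ring. Qed.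
Lemma ballR (x e y : R) : ball x e y <-> Rabs (y - x) < e.
Proof. reflexivity. Qed.

Lemma right_lim_eps (f : R -> R) a l : filterlim f (at_right a) (locally l) ->
  forall eps, 0 < eps -> exists d, 0 < d /\ forall y, a < y < a + d -> Rabs (f y - l) < eps.
Proof.
  intros H eps He. apply filterlim_locally with (eps := mkposreal eps He) in H.
  destruct H as [d Hd]. exists d. split. apply cond_pos. intros y Hy.
  apply Hd. apply ballR. rewrite Rabs_pos_eq; lra. lra.
Qed.

Lemma Rabs_sub_le x y : Rabs (x - y) <= Rabs x + Rabs y.
Proof. unfold Rminus. rewrite <- (Rabs_Ropp y). apply Rabs_triang. Qed.

Lemma alg_bound x1 y1 x2 y2 d M B : Rabs (x1 - x2) <= B -> Rabs (y1 - y2) <= B -> Rabs y1 <= M ->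
  Rabs x2 <= M -> Rabs d <= B -> Rabs (x1 * y1 - x2 * y2 - d) <= (2 * M + 1) * B.
Proof.
  intros H1 H2 H3 H4 H5.
  replace (x1 * y1 - x2 * y2 - d) with ((x1 - x2) * y1 + x2 * (y1 - y2) + - d) by ring.
  eapply Rle_trans. apply Rabs_triang. eapply Rle_trans. apply Rplus_le_compat_r. apply Rabs_triang.
  rewrite !Rabs_mult, Rabs_Ropp.
  assert (0 <= Rabs (x1 - x2)) by apply Rabs_pos. assert (0 <= Rabs (y1 - y2)) by apply Rabs_pos.
  assert (0 <= Rabs y1) by apply Rabs_pos. assert (0 <= Rabs x2) by apply Rabs_pos.
  assert (Rabs (x1 - x2) * Rabs y1 <= B * M) by (apply Rmult_le_compat; auto).
  assert (Rabs x2 * Rabs (y1 - y2) <= M * B) by (apply Rmult_le_compat; auto).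
  nra.
Qed.

Lemma sol_right_cont phX phY f0h G a z : is_solution phX phY f0h G -> 0 <= a -> 0 <= z <= 1 ->
  filterlim (fun t => G t z) (at_right a) (locally (G a z)).
Proof.
  intros [S1 [S2 [S3 S4]]] Ha Hz. destruct (Req_dec a 0). subst. apply S2; auto.
  assert (Hc : filterlim (fun t => G t z) (locally a) (locally (G a z))).
  { apply (ex_derive_continuous (fun t => G t z)). eexists. apply S3; auto; lra. }
  eapply filterlim_filter_le_1. 2: exact Hc. apply filter_le_within.
Qed.

Lemma uniq phX phY f0h G1 G2 :
  (forall z, 0 <= z <= 1 -> 0 <= phX z <= 1) -> (forall z, 0 <= z <= 1 -> 0 <= phY z <= 1) ->
  is_solution phX phY f0h G1 -> is_solution phX phY f0h G2 ->
  forall t z, 0 <= t -> 0 <= z <= 1 -> G1 t z = G2 t z.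
Proof.
  intros HphX HphY Sol1 Sol2 t0 z0 Ht0 Hz0.
  set (T := t0 + 1).
  destruct Sol1 as [A1 [A2 [A3 A4]]]. destruct Sol2 as [B1 [B2 [B3 B4]]].
  destruct (A4 T) as [M1 HM1]. unfold T; lra. destruct (B4 T) as [M2 HM2]. unfold T; lra.
  set (M := Rmax (Rmax M1 M2) 1).
  assert (HM1' : forall t z, 0 <= t <= T -> 0 <= z <= 1 -> Rabs (G1 t z) <= M).
  { intros. eapply Rle_trans. apply HM1; auto. unfold M. eapply Rle_trans. apply Rmax_l. apply Rmax_l. }
  assert (HM2' : forall t z, 0 <= t <= T -> 0 <= z <= 1 -> Rabs (G2 t z) <= M).
  { intros. eapply Rle_trans. apply HM2; auto. unfold M. eapply Rle_trans. apply Rmax_r. apply Rmax_l. }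
  assert (HM : 1 <= M) by (unfold M; apply Rmax_r).
  set (K := 2 * M + 1). set (h := / (2 * K)).
  assert (HK : 0 < K) by (unfold K; lra).
  assert (Hh : 0 < h) by (unfold h; apply Rinv_0_lt_compat; lra).
  assert (HKh : K * h = / 2) by (unfold h; field; lra).
  set (D := fun s z => G1 s z - G2 s z).
  assert (Strip : forall a B, 0 <= a -> 0 <= B -> (forall z, 0 <= z <= 1 -> D a z = 0) ->
     (forall s z, a <= s <= a + h -> s <= T -> 0 <= z <= 1 -> Rabs (D s z) <= B) ->
     forall s z, a <= s <= a + h -> s <= T -> 0 <= z <= 1 -> Rabs (D s z) <= K * h * B).
  { intros a B Ha HB HDa HDB s z Hs HsT Hz.
    assert (0 <= K * h * B) by (apply Rmult_le_pos; [apply Rmult_le_pos|]; lra).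
    destruct (Req_dec s a). subst. rewrite HDa; auto. rewrite Rabs_R0; auto.
    assert (Hmvt : forall e, a < e < s -> Rabs (D s z - D e z) <= K * h * B).
    { intros e He.
      set (df := fun x => (G1 x (phX z) * G1 x (phY z) - G1 x z) - (G2 x (phX z) * G2 x (phY z) - G2 x z)).
      assert (Hder : forall x, a < x -> is_derive (fun r => D r z) x (df x)).
      { intros x Hx. unfold D, df. apply (is_derive_minus (fun r => G1 r z) (fun r => G2 r z)).
        apply A3; auto; lra. apply B3; auto; lra. }
      destruct (MVT_gen (fun r => D r z) e s df) as [c [Hc Hc2]].
      - intros x Hx. apply Hder. rewrite Rmin_left in Hx by lra. lra.
      - intros x Hx. rewrite Rmin_left in Hx by lra. apply continuity_pt_filterlim.
        apply (ex_derive_continuous (fun r => D r z)). eexists. apply Hder. lra.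
      - rewrite Rmin_left in Hc by lra. rewrite Rmax_right in Hc by lra.
        rewrite Hc2. rewrite Rabs_mult.
        assert (Hdf : Rabs (df c) <= K * B).
        { unfold df. replace (G1 c (phX z) * G1 c (phY z) - G1 c z - (G2 c (phX z) * G2 c (phY z) - G2 c z))
            with (G1 c (phX z) * G1 c (phY z) - G2 c (phX z) * G2 c (phY z) - D c z) by (unfold D; ring).
          unfold K. apply alg_bound.
          - apply HDB; auto; lra.
          - apply HDB; auto; lra.
          - apply HM1'; auto; lra.
          - apply HM2'; auto; lra.
          - apply HDB; auto; lra. }
        rewrite (Rabs_pos_eq (s - e)) by lra.
        replace (K * h * B) with ((K * B) * h) by ring.
        apply Rmult_le_compat; [apply Rabs_pos | lra | exact Hdf | lra]. }
    destruct (Rle_or_lt (Rabs (D s z)) (K * h * B)) as [Hle|Hgt]; auto. exfalso.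
    set (eta := (Rabs (D s z) - K * h * B) / 2).
    assert (Heta : 0 < eta) by (unfold eta; lra).
    destruct (right_lim_eps _ _ _ (sol_right_cont phX phY f0h G1 a z ltac:(split; auto) Ha Hz) eta Heta) as [d1 [Hd1 Hd1']].
    destruct (right_lim_eps _ _ _ (sol_right_cont phX phY f0h G2 a z ltac:(split; auto) Ha Hz) eta Heta) as [d2 [Hd2p Hd2']].
    set (d := Rmin d1 d2).
    assert (Hd : 0 < d) by (apply Rmin_glb_lt; lra).
    assert (Hd2 : forall y, a < y < a + d -> Rabs (D y z - 0) < 2 * eta).
    { intros y Hy. assert (d <= d1) by apply Rmin_l. assert (d <= d2) by apply Rmin_r.
      rewrite <- (HDa z Hz). unfold D.
      replace (G1 y z - G2 y z - (G1 a z - G2 a z)) with ((G1 y z - G1 a z) - (G2 y z - G2 a z)) by ring.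
      eapply Rle_lt_trans. apply Rabs_sub_le.
      assert (Rabs (G1 y z - G1 a z) < eta) by (apply Hd1'; lra).
      assert (Rabs (G2 y z - G2 a z) < eta) by (apply Hd2'; lra). lra. }
    set (e := a + Rmin (d / 2) ((s - a) / 2)).
    assert (He : a < e < s /\ e < a + d).
    { unfold e. assert (0 < Rmin (d / 2) ((s - a) / 2)) by (apply Rmin_glb_lt; lra).
      assert (Rmin (d / 2) ((s - a) / 2) <= d / 2) by apply Rmin_l.
      assert (Rmin (d / 2) ((s - a) / 2) <= (s - a) / 2) by apply Rmin_r. lra. }
    assert (E1 := Hd2 e ltac:(lra)). rewrite Rminus_0_r in E1. unfold eta in E1.
    assert (E2 := Hmvt e ltac:(lra)).
    assert (Rabs (D s z) <= Rabs (D s z - D e z) + Rabs (D e z)).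
    { replace (D s z) with ((D s z - D e z) + D e z) at 1 by ring. apply Rabs_triang. }
    lra. }
  assert (Zero : forall a, 0 <= a -> (forall z, 0 <= z <= 1 -> D a z = 0) ->
     forall s z, a <= s <= a + h -> s <= T -> 0 <= z <= 1 -> D s z = 0).
  { intros a Ha HDa.
    assert (It : forall n s z, a <= s <= a + h -> s <= T -> 0 <= z <= 1 -> Rabs (D s z) <= (/ 2) ^ n * (2 * M)).
    { induction n; intros s z Hs HsT Hz.
      - simpl. rewrite Rmult_1_l. unfold D. eapply Rle_trans. apply Rabs_sub_le.
        assert (Rabs (G1 s z) <= M) by (apply HM1'; auto; lra).
        assert (Rabs (G2 s z) <= M) by (apply HM2'; auto; lra). lra.
      - simpl. replace (/ 2 * (/ 2) ^ n * (2 * M)) with (K * h * ((/ 2) ^ n * (2 * M))) by (rewrite HKh; ring).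
        apply (Strip a); auto. apply Rmult_le_pos. apply pow_le; lra. lra. }
    intros s z Hs HsT Hz. destruct (Req_dec (D s z) 0); auto. exfalso.
    assert (0 < Rabs (D s z)) by (apply Rabs_pos_lt; auto).
    destruct (pow_lt_1_zero (/ 2) ltac:(rewrite Rabs_pos_eq; lra) (Rabs (D s z) / (2 * M))) as [N HN].
    apply Rdiv_lt_0_compat; lra.
    specialize (HN N (Nat.le_refl N)). rewrite Rabs_pos_eq in HN by (apply pow_le; lra).
    specialize (It N s z Hs HsT Hz).
    apply (Rmult_lt_compat_r (2 * M)) in HN. 2: lra.
    unfold Rdiv in HN. rewrite Rmult_assoc, Rinv_l in HN by lra. lra. }
  assert (Glob : forall k s z, 0 <= s <= INR k * h -> s <= T -> 0 <= z <= 1 -> D s z = 0).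
  { induction k; intros s z Hs HsT Hz.
    - simpl in Hs. assert (s = 0) by lra. subst. unfold D. rewrite A1, B1; auto. ring.
    - destruct (Rle_or_lt s (INR k * h)). apply IHk; auto; lra.
      rewrite S_INR in Hs.
      assert (0 <= INR k * h) by (apply Rmult_le_pos; [apply pos_INR | lra]).
      apply (Zero (INR k * h)); auto. intros z' Hz'. apply IHk; auto; lra. lra. }
  destruct (INR_unbounded (t0 / h)) as [k Hk].
  assert (t0 <= INR k * h).
  { apply (Rmult_lt_compat_r h) in Hk; auto. unfold Rdiv in Hk. rewrite Rmult_assoc, Rinv_l in Hk; lra. }
  assert (D t0 z0 = 0) by (apply (Glob k); auto; unfold T; lra).
  unfold D in H0. lra.
Qed.

Theorem proposition3p1 (pX pY f0 : nat -> R)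
  (hX : is_density pX) (hY : is_density pY) (hf0 : is_density f0)
  (hX0 : pX 0%nat <> 1) (hY0 : pY 0%nat <> 1) :
  exists F : R -> R -> R,
    is_solution (pgf pX) (pgf pY) (pgf f0) F /\
    (forall G : R -> R -> R, is_solution (pgf pX) (pgf pY) (pgf f0) G ->
       forall t z, 0 <= t -> 0 <= z <= 1 -> G t z = F t z) /\
    (forall t z, 0 < t -> 0 <= z <= 1 ->
       is_series (fun n => exp (- t) * (1 - exp (- t)) ^ n *
                           qhat (pgf pX) (pgf pY) (pgf f0) n z) (F t z)) /\
    (forall t, 0 < t -> exists g : nat -> R,
       is_density g /\ forall z, 0 <= z <= 1 -> F t z = pgf g z).
Proof.
  set (F := fun t z => FF pX pY f0 t z).
  assert (SF : is_solution (pgf pX) (pgf pY) (pgf f0) F).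
  { split; [|split; [|split]].
    - intros z Hz. unfold F. apply F_0.
    - intros z Hz.
      assert (Hc : filterlim (fun t => F t z) (locally 0) (locally (F 0 z))).
      { apply (ex_derive_continuous (fun t => F t z)). eexists. unfold F.
        apply F_deriv; auto; lra. }
      eapply filterlim_filter_le_1. 2: exact Hc. apply filter_le_within.
    - intros t z Ht Hz. unfold F. apply F_deriv; auto; lra.
    - intros T HT. exists 1. intros t z Ht Hz. unfold F.
      destruct (F_range pX pY f0 t z hX hY hf0 ltac:(lra) Hz). rewrite Rabs_pos_eq; lra. }
  exists F. split; [exact SF|]. split; [|split].
  - intros G HG t z Ht Hz. apply (uniq (pgf pX) (pgf pY) (pgf f0) G F); auto.
    intros; apply pgf01; auto. intros; apply pgf01; auto.
  - intros t z Ht Hz. exact (F_series pX pY f0 t z hX hY hf0 ltac:(lra) Hz).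
  - intros t Ht. exact (F_density pX pY f0 t hX hY hf0 ltac:(lra)).
Qed.
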